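(* Fix any constant $c > 0$. There exists an adaptive algorithm that, given $n$ items among which an unknown number $k$ are defective and accessed through noisy group tests as in the context, outputs $\bar k$ satisfying $\frac{\bar k}{2} \le k \le \bar k$ with probability $1 - O(n^{-c})$, using an average of $O(\log k \cdot \log n)$ tests. Moreover, for any fixed $\epsilon \in (0,1)$ there exists such an algorithm outputting $\bar k$ with $(1-\epsilon)\bar k \le k \le \bar k$ with probability $1-O(n^{-c})$, using an average of $O(\log k\cdot\log n)$ tests, where the implicit constant in the number of tests depends on $\epsilon$.
   Context: Noisy group test: a test is a subset (pool) of the items, and its outcome is $Y = U \oplus Z$, where $U=1$ if the pool contains at least one defective and $U=0$ otherwise, $Z\sim\mathrm{Bernoulli}(\rho)$ for a fixed $\rho \in (0,\frac12)$ independently across tests, and $\oplus$ is addition modulo 2. Tests may be chosen adaptively (depending on previous outcomes) and the number of tests may be random. Asymptotics are as $n\to\infty$. *)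

(* Defs.v *)
From mathcomp Require Import all_boot.
From Stdlib Require Import Reals.

Set Implicit Arguments.
Unset Strict Implicit.
Unset Printing Implicit Defensive.

(* Items are 'I_n; the defective set is D : {set 'I_n}, k = #|D|.
   A pool is A : {set 'I_n}; U = 1 iff A meets D; Y = U xor Z with
   Z ~ Bernoulli(rho) independent across tests. *)

Inductive action (n : nat) : Type :=
| Test of {set 'I_n}
| Output of nat.

(* A history records, for each step taken so far, the index of the action
   chosen (among the algorithm's randomized options) and the observed test
   outcome. *)
Definition history := seq (nat * bool).

Definition strategy (n : nat) := history -> seq (R * action n).

Definition wsum {A : Type} (s : seq (R * A)) : R :=
  foldr (fun p acc => (p.1 + acc)%R) 0%R s.

Definition valid_strategy (n : nat) (alg : strategy n) : Prop :=
  forall h : history,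
    List.Forall (fun p : R * action n => (0 <= p.1)%R) (alg h) /\
    wsum (alg h) = 1%R.

Definition pos_prob (rho : R) (n : nat) (D : {set 'I_n}) (A : {set 'I_n}) : R :=
  if [disjoint A & D] then rho else (1 - rho)%R.

Fixpoint halt_prob (rho : R) (n : nat) (D : {set 'I_n}) (alg : strategy n)
    (good : nat -> bool) (N : nat) (h : history) : R :=
  match N with
  | 0 => 0%R
  | N'.+1 =>
      let cs := alg h in
      foldr Rplus 0%R
        (map (fun ic : nat * (R * action n) =>
                let '(i, (w, a)) := ic in
                (w * match a with
                     | Output m => if good m then 1 else 0
                     | Test A =>
                         let q := pos_prob rho D A in
                         q * halt_prob rho D alg good N' (rcons h (i, true))
                         + (1 - q) * halt_prob rho D alg good N' (rcons h (i, false))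
                     end)%R)
             (zip (iota 0 (size cs)) cs))
  end.

(* Expected number of tests performed among the first N steps, i.e.
   E[min(T, N)]-type truncation; its supremum over N is E[T]. *)
Fixpoint exp_tests (rho : R) (n : nat) (D : {set 'I_n}) (alg : strategy n)
    (N : nat) (h : history) : R :=
  match N with
  | 0 => 0%R
  | N'.+1 =>
      let cs := alg h in
      foldr Rplus 0%R
        (map (fun ic : nat * (R * action n) =>
                let '(i, (w, a)) := ic in
                (w * match a with
                     | Output _ => 0
                     | Test A =>
                         let q := pos_prob rho D A in
                         1 + q * exp_tests rho D alg N' (rcons h (i, true))
                         + (1 - q) * exp_tests rho D alg N' (rcons h (i, false))
                     end)%R)
             (zip (iota 0 (size cs)) cs))
  end.

Definition good_half (k kbar : nat) : bool := (kbar <= 2 * k) && (k <= kbar).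

Definition good_eps (eps : R) (k kbar : nat) : bool :=
  if Rle_dec ((1 - eps) * INR kbar) (INR k) then (k <= kbar) else false.

(* The family alg (one strategy per n) is a valid algorithm which, for all
   large n and every defective set D (k = #|D|), uses on average
   O(log(k+2) * log n) tests and outputs a good estimate with probability
   at least 1 - O(n^{-c}) (probability = sup over N of halt_prob). *)
Definition achieves (rho c : R) (good : nat -> nat -> bool)
    (alg : forall n : nat, strategy n) : Prop :=
  (forall n, valid_strategy (alg n)) /\
  exists (C1 C2 : R) (n0 : nat),
    forall n : nat, (n0 <= n)%N -> forall D : {set 'I_n},
      (forall N : nat,
         (exp_tests rho D (alg n) N [::]
            <= C1 * ln (INR #|D| + 2) * ln (INR n))%R) /\
      (forall e : R, (0 < e)%R -> exists N : nat,
         (1 - C2 * Rpower (INR n) (- c) - e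
            <= halt_prob rho D (alg n) (good #|D|) N [::])%R).

(* Main.v *)
Require Import Defs.
From mathcomp Require Import all_boot all_algebra.
From mathcomp Require Import Rstruct.
From mathcomp Require Import zify.
From Stdlib Require Import Reals Lra Lia Psatz FunctionalExtensionality.

Set Implicit Arguments.
Unset Strict Implicit.
Unset Printing Implicit Defensive.

Import GRing.Theory.

Module PartA.


Local Open Scope R_scope.

Fixpoint HP {S : Type} (isout : S -> bool) (outv : S -> nat) (q : S -> R)
  (nxt : S -> bool -> S) (good : nat -> bool) (N : nat) (s : S) : R :=
  match N with
  | 0 => 0
  | N'.+1 => if isout s then (if good (outv s) then 1 else 0)
             else q s * HP isout outv q nxt good N' (nxt s true)
                  + (1 - q s) * HP isout outv q nxt good N' (nxt s false)
  end.

Fixpoint ET {S : Type} (isout : S -> bool) (q : S -> R)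
  (nxt : S -> bool -> S) (N : nat) (s : S) : R :=
  match N with
  | 0 => 0
  | N'.+1 => if isout s then 0
             else 1 + q s * ET isout q nxt N' (nxt s true)
                  + (1 - q s) * ET isout q nxt N' (nxt s false)
  end.

Lemma foldr_zip_iota {B : Type} (F : nat * (R * B) -> R) (G : R * B -> R)
  (cs : seq (R * B)) k :
  (forall i w a, F (i, (w, a)) = G (w, a)) ->
  foldr Rplus 0 (map F (zip (iota k (size cs)) cs)) = foldr Rplus 0 (map G cs).
Proof.
move=> HFG; elim: cs k => [|[w a] cs IH] k //=.
by rewrite HFG IH.
Qed.

Lemma lin_comb {B : Type} (pos : B -> R) (l : seq (R * B)) X Y :
  foldr Rplus 0 (map (fun wA => wA.1 * (pos wA.2 * X + (1 - pos wA.2) * Y)) l)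
  = foldr Rplus 0 (map (fun wA => wA.1 * pos wA.2) l) * X
    + (foldr Rplus 0 (map fst l) - foldr Rplus 0 (map (fun wA => wA.1 * pos wA.2) l)) * Y.
Proof. elim: l => [|[w a] l IH] /=; first ring. rewrite IH; ring. Qed.

Lemma lin_comb1 {B : Type} (pos : B -> R) (l : seq (R * B)) X Y :
  foldr Rplus 0 (map (fun wA => wA.1 * (1 + pos wA.2 * X + (1 - pos wA.2) * Y)) l)
  = foldr Rplus 0 (map fst l) + foldr Rplus 0 (map (fun wA => wA.1 * pos wA.2) l) * X
    + (foldr Rplus 0 (map fst l) - foldr Rplus 0 (map (fun wA => wA.1 * pos wA.2) l)) * Y.
Proof. elim: l => [|[w a] l IH] /=; first ring. rewrite IH; ring. Qed.

Definition qof n rho (D : {set 'I_n}) (l : seq (R * {set 'I_n})) : R :=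
  foldr Rplus 0 (map (fun wA => wA.1 * pos_prob rho D wA.2) l).

Section Bridge.
Variables (n : nat) (rho : R) (D : {set 'I_n}) (alg : strategy n) (S : Type)
  (st : history -> S) (isout : S -> bool) (outv : S -> nat)
  (tl : S -> seq (R * {set 'I_n})) (nxt : S -> bool -> S).
Hypothesis Halg : forall h, alg h = if isout (st h) then [:: (1, Output n (outv (st h)))]
    else [seq (wA.1, Test wA.2) | wA <- tl (st h)].
Hypothesis Hst : forall h p, st (rcons h p) = nxt (st h) p.2.
Hypothesis Hsum : forall s, ~~ isout s -> foldr Rplus 0 (map fst (tl s)) = 1.

Lemma bridge_halt good N h :
  halt_prob rho D alg good N h =
  HP isout outv (fun s => qof rho D (tl s)) nxt good N (st h).
Proof.
elim: N h => [|N IH] h //=.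
rewrite Halg; case E: (isout (st h)) => /=.
  by case: (good _); ring.
rewrite (foldr_zip_iota (G := fun wa => wa.1 * match wa.2 with
   | Output m => if good m then 1 else 0
   | Test A => pos_prob rho D A * HP isout outv (fun s => qof rho D (tl s)) nxt good N (nxt (st h) true)
     + (1 - pos_prob rho D A) * HP isout outv (fun s => qof rho D (tl s)) nxt good N (nxt (st h) false) end)).
  rewrite -map_comp.
  rewrite (eq_map (g := fun wA : R * {set 'I_n} => wA.1 * (pos_prob rho D wA.2 * HP isout outv (fun s => qof rho D (tl s)) nxt good N (nxt (st h) true) + (1 - pos_prob rho D wA.2) * HP isout outv (fun s => qof rho D (tl s)) nxt good N (nxt (st h) false)))); last by case.
  by rewrite lin_comb Hsum ?E // /qof.
move=> i w [A|m] //=.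
by rewrite !IH !Hst.
Qed.

Lemma bridge_exp N h :
  exp_tests rho D alg N h = ET isout (fun s => qof rho D (tl s)) nxt N (st h).
Proof.
elim: N h => [|N IH] h //=.
rewrite Halg; case E: (isout (st h)) => /=.
  ring.
rewrite (foldr_zip_iota (G := fun wa => wa.1 * match wa.2 with
   | Output m => 0
   | Test A => 1 + pos_prob rho D A * ET isout (fun s => qof rho D (tl s)) nxt N (nxt (st h) true)
     + (1 - pos_prob rho D A) * ET isout (fun s => qof rho D (tl s)) nxt N (nxt (st h) false) end)).
  rewrite -map_comp.
  rewrite (eq_map (g := fun wA : R * {set 'I_n} => wA.1 * (1 + pos_prob rho D wA.2 * ET isout (fun s => qof rho D (tl s)) nxt N (nxt (st h) true) + (1 - pos_prob rho D wA.2) * ET isout (fun s => qof rho D (tl s)) nxt N (nxt (st h) false)))); last by case.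
  by rewrite lin_comb1 Hsum ?E // /qof.
move=> i w [A|m] //=.
by rewrite !IH !Hst.
Qed.
End Bridge.

Section Potential.
Variables (S : Type) (isout : S -> bool) (outv : S -> nat) (q : S -> R)
  (nxt : S -> bool -> S) (good : nat -> bool) (inv : S -> Prop).
Hypothesis Hinv : forall s b, inv s -> ~~ isout s -> inv (nxt s b).
Hypothesis Hq : forall s, inv s -> ~~ isout s -> 0 <= q s <= 1.

Lemma HP_pot (Psi : S -> R) (rank : S -> nat) :
  (forall s, inv s -> isout s -> 1 - Psi s <= (if good (outv s) then 1 else 0)) ->
  (forall s, inv s -> ~~ isout s ->
     (forall b, (rank (nxt s b) < rank s)%nat) /\
     q s * Psi (nxt s true) + (1 - q s) * Psi (nxt s false) <= Psi s) ->
  forall N s, inv s -> (rank s < N)%nat -> 1 - Psi s <= HP isout outv q nxt good N s.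
Proof.
move=> Hout Htest; elim=> [|N IH] s Is Hr //=.
case E: (isout s); first by apply: Hout; rewrite ?E.
have nE : ~~ isout s by rewrite E.
have [Hrk Hsup] := Htest s Is nE.
have [q0 q1] := Hq Is nE.
have h1 := IH (nxt s true) (Hinv true Is nE) (leq_trans (Hrk true) Hr).
have h2 := IH (nxt s false) (Hinv false Is nE) (leq_trans (Hrk false) Hr).
nra.
Qed.

Lemma ET_pot (Th : S -> R) :
  (forall s, inv s -> 0 <= Th s) ->
  (forall s, inv s -> ~~ isout s ->
     1 + q s * Th (nxt s true) + (1 - q s) * Th (nxt s false) <= Th s) ->
  forall N s, inv s -> ET isout q nxt N s <= Th s.
Proof.
move=> H0 Htest; elim=> [|N IH] s Is /=; first exact: H0.
case E: (isout s); first exact: H0.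
have nE : ~~ isout s by rewrite E.
have [q0 q1] := Hq Is nE.
have h1 := IH (nxt s true) (Hinv true Is nE).
have h2 := IH (nxt s false) (Hinv false Is nE).
have := Htest s Is nE. nra.
Qed.
End Potential.

End PartA.
Import PartA.


Import GRing.Theory.

Section Pools.
Local Open Scope ring_scope.

Definition wt n (p : R) (f : {ffun 'I_n -> bool}) : R :=
  \prod_(i : 'I_n) (if f i then p else 1 - p).

Definition pool_list n (p : R) : seq (R * {set 'I_n}) :=
  [seq (wt p f, [set i | f i]) | f <- enum {ffun 'I_n -> bool}].

Lemma foldr_big {A : Type} (F : A -> R) (l : seq A) :
  foldr Rplus R0 (map F l) = \sum_(x <- l) F x.
Proof. elim: l => [|a l IH] /=; by rewrite ?big_nil ?big_cons ?IH. Qed.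

Lemma sum_wt n (p : R) : \sum_(f : {ffun 'I_n -> bool}) wt p f = 1.
Proof.
rewrite /wt -(bigA_distr_bigA (fun (i : 'I_n) (b : bool) => if b then p else 1 - p)).
rewrite big1 // => i _. by rewrite big_bool /= addrC subrK.
Qed.

Definition ind n (D : {set 'I_n}) (f : {ffun 'I_n -> bool}) : R :=
  if [disjoint [set i | f i] & D] then R1 else R0.

Lemma indE n (D : {set 'I_n}) f :
  ind D f = \prod_(i : 'I_n) (if f i && (i \in D) then 0 else 1).
Proof.
rewrite /ind; case: (pickP (fun i => f i && (i \in D))) => [i Hi | H0].
  rewrite (bigD1 i) //= Hi mul0r.
  move/andP: Hi => [H1 H2].
  have -> : [disjoint [set i0 | f i0] & D] = false.
    apply/negbTE/negP => Hd.
    by have := disjointFr Hd (x := i); rewrite inE H1 H2 => /(_ isT).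
  by [].
rewrite big1 => [|i _]; last by rewrite H0.
have -> : [disjoint [set i0 | f i0] & D] = true.
  rewrite disjoint_subset; apply/subsetP => x; rewrite inE => Hx.
  rewrite inE /=; apply/negP => HD.
  by have := H0 x; rewrite /= Hx HD.
by [].
Qed.

Lemma sum_wt_ind n (p : R) (D : {set 'I_n}) :
  \sum_(f : {ffun 'I_n -> bool}) wt p f * ind D f = (1 - p) ^+ #|D|.
Proof.
have -> : \sum_(f : {ffun 'I_n -> bool}) wt p f * ind D f =
  \sum_(f : {ffun 'I_n -> bool}) \prod_(i : 'I_n)
     (fun (i : 'I_n) (b : bool) => if b then (if i \in D then 0 else p) else 1 - p) i (f i).
  apply: eq_bigr => f _; rewrite indE /wt -big_split /=.
  apply: eq_bigr => i _; case: (f i); case: (i \in D) => /=;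
    by rewrite ?mulr0 ?mulr1.
rewrite -(bigA_distr_bigA (fun (i : 'I_n) (b : bool) => if b then (if i \in D then 0 else p) else 1 - p)) /=.
rewrite -prodr_const (big_mkcond (fun i => i \in D)) /=.
apply: eq_bigr => i _; rewrite big_bool /=.
by case: (i \in D); rewrite ?add0r // addrC subrK.
Qed.

Lemma sum_lin (I : finType) (a b : R) (F G : I -> R) :
  \sum_i (a * F i - b * G i) = a * \sum_i F i - b * \sum_i G i.
Proof. by rewrite sumrB -!mulr_sumr. Qed.

End Pools.

Lemma pool_sum n (p : R) : foldr Rplus 0%R (map fst (pool_list n p)) = 1%R.
Proof.
rewrite foldr_big /pool_list big_map big_enum /=.
exact: sum_wt.
Qed.

Lemma pool_nonneg n (p : R) : (0 <= p <= 1)%R ->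
  forall x, x \in pool_list n p -> (0 <= x.1)%R.
Proof.
move=> [p0 p1] x /mapP [f _ ->] /=.
rewrite /wt; elim/big_ind: _ => //.
- exact: Rle_0_1.
- move=> a b Ha Hb. change (0 <= a * b)%R. nra.
- move=> i _; case: (f i) => //. change (0 <= 1 - p)%R. lra.
Qed.

Lemma pool_q n (p rho : R) (D : {set 'I_n}) :
  foldr Rplus 0%R (map (fun wA => wA.1 * pos_prob rho D wA.2)%R (pool_list n p))
  = (1 - rho - (1 - 2 * rho) * (1 - p) ^ #|D|)%R.
Proof.
rewrite foldr_big /pool_list big_map big_enum /=.
have E : forall f : {ffun 'I_n -> bool},
   (wt p f * pos_prob rho D [set i | f i])%R =
   ((1 - rho) * wt p f - (1 - 2 * rho) * (wt p f * ind D f))%R.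
  move=> f; rewrite /pos_prob /ind; case: ifP => _; ring.
rewrite (eq_bigr _ (fun f _ => E f)).
rewrite RpowE -(sum_wt_ind p D).
have S1 := sum_wt n p.
apply: (eq_trans (sum_lin _ _ _ _)).
rewrite S1 mulr1.
reflexivity.
Qed.

Local Open Scope R_scope.

Lemma exp_le x y : x <= y -> exp x <= exp y.
Proof. move=> [H|->]; [left; exact: exp_increasing | right; reflexivity]. Qed.

Lemma exp_pow u k : exp u ^ k = exp (INR k * u).
Proof.
elim: k => [|k IH]; first by rewrite /= Rmult_0_l exp_0.
rewrite S_INR; change (exp u ^ k.+1) with (exp u * exp u ^ k); rewrite IH -exp_plus; f_equal; ring.
Qed.

Lemma exp_ge1 x : 0 <= x -> 1 <= exp x.
Proof. move=> H; rewrite -exp_0; exact: exp_le. Qed.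

Definition kb (y : R) : nat :=
  let z := (up y - 1)%Z in
  if Rlt_dec (IZR z) y then Z.to_nat z else Z.to_nat (z - 1).

Lemma kb_spec y : 0 < y ->
  INR (kb y) < y /\ forall k : nat, INR k < y -> (k <= kb y)%nat.
Proof.
move=> y0; rewrite /kb.
have [H1 H2] := archimed y.
have Hz : IZR (up y - 1) = IZR (up y) - 1 by rewrite minus_IZR.
have zpos : (0 < up y)%Z by apply: lt_0_IZR; lra.
case: Rlt_dec => Hlt.
  rewrite INR_IZR_INZ Znat.Z2Nat.id; last by lia.
  split=> // k Hk.
  have : (Z.of_nat k < up y)%Z.
    apply: lt_IZR; rewrite -INR_IZR_INZ; lra.
  move=> Hk'; apply/leP; lia.
have Heq : IZR (up y - 1) = y by lra.
have z1 : (1 < up y)%Z.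
  apply: lt_IZR; lra.
rewrite INR_IZR_INZ Znat.Z2Nat.id; last by lia.
split.
  rewrite minus_IZR; lra.
move=> k Hk.
have : (Z.of_nat k < up y - 1)%Z.
  apply: lt_IZR; rewrite -INR_IZR_INZ; lra.
move=> Hk'; apply/leP; lia.
Qed.

Lemma powS' x k : x ^ k.+1 = x * x ^ k.
Proof. by []. Qed.

Inductive St := Run of nat & nat & nat | Stop of nat.

Section Algo.
Variables (rho c eps : R).

Definition lb := - ln (1 - eps) / 2.
Definition beta := exp lb.
Definition T (j : nat) := exp ((INR j - 1) * lb).
Definition gam := (1 - 2 * rho) * (1/2 - exp (- beta * ln 2)).
Definition th := 1/2 + gam / 2.
Definition aa := gam / 4.
Definition qhi := 1/2 + gam.
Definition kap := Rmin (aa * (qhi / (1 + aa) - th)) (aa * (th - 1 / (2 * (1 - aa)))).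
Definition pj (j : nat) := 1 - exp (- ln 2 / T j).

Variable n : nat.
Definition mm : nat := (Z.to_nat (up ((c + 1) * ln (INR n) / kap)) + 1)%nat.
Definition JJ : nat := Z.to_nat (up (ln (INR n) / lb)).

Definition nxt (s : St) (b : bool) : St :=
  match s with
  | Run j t x =>
      if (t.+1 < mm)%nat then Run j t.+1 (if b then x.+1 else x)
      else if Rle_dec (INR (if b then x.+1 else x)) (th * INR mm) then Stop j
      else Run j.+1 0 0
  | Stop j => Stop j
  end.

Definition isout (s : St) : bool :=
  match s with Run j _ _ => (JJ <= j)%nat | Stop _ => true end.

Definition outv (s : St) : nat :=
  match s with
  | Run _ _ _ => kb (exp (INR JJ * lb))
  | Stop j => kb (exp (INR j * lb))
  end.

Definition tl (s : St) : seq (R * {set 'I_n}) :=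
  match s with Run j _ _ => pool_list n (pj j) | Stop _ => [::] end.

Definition stt (h : history) : St := foldl (fun s p => nxt s p.2) (Run 0 0 0) h.

Definition alg : strategy n := fun h =>
  if isout (stt h) then [:: (1, Output n (outv (stt h)))]
  else [seq (wA.1, Test wA.2) | wA <- tl (stt h)].


Lemma ln2_pos : 0 < ln 2.
Proof. have := ln_lt_2; lra. Qed.

Lemma T_pos j : 0 < T j.
Proof. exact: exp_pos. Qed.

Lemma pj_range j : 0 <= pj j <= 1.
Proof.
rewrite /pj; have := exp_pos (- ln 2 / T j).
have : exp (- ln 2 / T j) <= 1.
  rewrite -exp_0; apply: exp_le.
  have := ln2_pos; have := T_pos j => H1 H2.
  rewrite /Rdiv; have : 0 < / T j by apply: Rinv_0_lt_compat.
  nra.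
lra.
Qed.

Lemma wsum_map (l : seq (R * {set 'I_n})) :
  wsum [seq (wA.1, Test wA.2) | wA <- l] = foldr Rplus 0 (map fst l).
Proof. by elim: l => [|[w A] l IH] //=; rewrite IH. Qed.

Lemma valid_alg : valid_strategy alg.
Proof.
move=> h; rewrite /alg.
have Hout : forall m, (List.Forall (fun p : R * action n => (0 <= p.1)%R) [:: (1%R, Output n m)]) /\
   (wsum [:: (1%R, Output n m)] = 1%R).
  move=> m; split; first by constructor; [simpl; lra | constructor].
  rewrite /wsum /=; lra.
case E: (stt h) => [j t x|j] /=; last by apply: Hout.
case: (JJ <= j)%nat; first by apply: Hout.
split; last by rewrite wsum_map; exact: pool_sum.
rewrite /pool_list; have := pj_range j.
elim: (enum _) => [|f l IH] Hp /=; first by constructor.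
constructor; last by apply: IH.
simpl; rewrite /wt; elim/big_ind: _ => //.
- exact: Rle_0_1.
- move=> u v Hu Hv; change (0 <= u * v); nra.
- move=> i _; case: (f i); [lra | change (0 <= 1 - pj j); lra].
Qed.


Section Params.
Hypothesis hrho : 0 < rho < 1/2.
Hypothesis heps : 0 < eps < 1.
Hypothesis hc : 0 < c.

Lemma lb_pos : 0 < lb.
Proof.
rewrite /lb.
have : ln (1 - eps) < 0 by rewrite -ln_1; apply: ln_increasing; lra.
lra.
Qed.

Lemma beta_gt1 : 1 < beta.
Proof. rewrite /beta -exp_0; apply: exp_increasing; exact: lb_pos. Qed.

Lemma exp_mln2 : exp (- ln 2) = / 2.
Proof. rewrite exp_Ropp exp_ln //; lra. Qed.

Lemma ebeta_range : 0 < exp (- beta * ln 2) < / 2.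
Proof.
split; first exact: exp_pos.
rewrite -exp_mln2; apply: exp_increasing.
have := beta_gt1; have := ln2_pos; nra.
Qed.

Lemma gam_range : 0 < gam < 1/2.
Proof. rewrite /gam; have := ebeta_range; nra. Qed.

Lemma aa_range : 0 < aa < 1/8.
Proof. rewrite /aa; have := gam_range; lra. Qed.

Lemma kap_pos : 0 < kap.
Proof.
have [g0 g1] := gam_range.
rewrite /kap /aa /qhi /th; apply: Rmin_glb_lt.
  apply: Rmult_lt_0_compat; first lra.
  have -> : (1 / 2 + gam) / (1 + gam / 4) - (1 / 2 + gam / 2)
     = ((1 / 2 + gam) - (1 / 2 + gam / 2) * (1 + gam / 4)) / (1 + gam / 4) by field; lra.
  apply: Rdiv_lt_0_compat; nra.
apply: Rmult_lt_0_compat; first lra.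
have -> : (1 / 2 + gam / 2) - 1 / (2 * (1 - gam / 4))
   = (2 * (1 / 2 + gam / 2) * (1 - gam / 4) - 1) / (2 * (1 - gam / 4)) by field; lra.
apply: Rdiv_lt_0_compat; nra.
Qed.

Lemma T_mono i j : (i <= j)%nat -> T i <= T j.
Proof.
move=> /leP Hij; rewrite /T; apply: exp_le.
have := le_INR _ _ Hij; have := lb_pos; nra.
Qed.

Lemma beta_T j : beta * T j = exp (INR j * lb).
Proof. rewrite /beta /T -exp_plus; f_equal; ring. Qed.

Lemma T_S j : T j.+1 = beta * T j.
Proof. rewrite beta_T /T S_INR; f_equal; ring. Qed.

Lemma eps_T j : (1 - eps) * exp (INR j.+1 * lb) = T j.
Proof.
have -> : 1 - eps = exp (- (2 * lb)).
  rewrite /lb; have -> : - (2 * (- ln (1 - eps) / 2)) = ln (1 - eps) by field.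
  rewrite exp_ln //; lra.
rewrite -exp_plus /T S_INR; f_equal; ring.
Qed.


Section Chain.
Hypothesis hn : (3 <= n)%nat.
Variable D : {set 'I_n}.

Let k := #|D|.
Let K := INR k.
Local Notation M := (INR mm).

Definition qj (j : nat) := 1 - rho - (1 - 2 * rho) * exp (INR k * (- ln 2 / T j)).

Lemma qS_eq j t x : qof rho D (tl (Run j t x)) = qj j.
Proof.
rewrite /qof /= pool_q /qj /pj.
have -> : 1 - (1 - exp (- ln 2 / T j)) = exp (- ln 2 / T j) by ring.
by rewrite exp_pow.
Qed.

Lemma ek_range j : 0 < exp (INR k * (- ln 2 / T j)) <= 1.
Proof.
split; first exact: exp_pos.
rewrite -exp_0; apply: exp_le.
have := pos_INR k; have := ln2_pos; have := T_pos j => H1 H2 H3.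
have : 0 < / T j by apply: Rinv_0_lt_compat.
move=> H4; rewrite /Rdiv.
have -> : INR k * (- ln 2 * / T j) = - (INR k * (ln 2 * / T j)) by ring.
have : 0 <= INR k * (ln 2 * / T j).
  apply: Rmult_le_pos => //; apply: Rmult_le_pos; lra.
lra.
Qed.

Lemma qj_range j : rho <= qj j <= 1 - rho.
Proof. rewrite /qj; have := ek_range j; nra. Qed.

Lemma qj_big j : beta * T j <= K -> qhi <= qj j.
Proof.
move=> HK.
have Tp := T_pos j; have l2 := ln2_pos.
set u := / T j.
have u0 : 0 < u by apply: Rinv_0_lt_compat.
have Tu : T j * u = 1 by rewrite /u; field; lra.
have H1 : beta <= K * u.
  have : beta * T j * u <= K * u by apply: Rmult_le_compat_r; lra.
  have -> : beta * T j * u = beta by rewrite Rmult_assoc Tu; ring.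
  done.
have H2 : INR k * (- ln 2 / T j) <= - beta * ln 2.
  rewrite /Rdiv -/u -/K.
  have : beta * ln 2 <= K * u * ln 2 by apply: Rmult_le_compat_r; lra.
  nra.
have := exp_le H2.
rewrite /qj /qhi /gam; nra.
Qed.

Lemma qj_small j : K <= T j -> qj j <= 1/2.
Proof.
move=> HK.
have Tp := T_pos j; have l2 := ln2_pos.
set u := / T j.
have u0 : 0 < u by apply: Rinv_0_lt_compat.
have Tu : T j * u = 1 by rewrite /u; field; lra.
have H1 : K * u <= 1.
  have : K * u <= T j * u by apply: Rmult_le_compat_r; lra.
  lra.
have H2 : - ln 2 <= INR k * (- ln 2 / T j).
  rewrite /Rdiv -/u -/K.
  have : K * u * ln 2 <= 1 * ln 2 by apply: Rmult_le_compat_r; lra.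
  nra.
have := exp_le H2; rewrite exp_mln2.
rewrite /qj; nra.
Qed.


Definition gL j := qj j * exp (- aa) + 1 - qj j.
Definition hS j := qj j * exp aa + 1 - qj j.
Definition Lf j t x := exp (aa * (th * M - INR x)) * gL j ^ (mm - t).
Definition Sf j t x := exp (aa * (INR x - th * M)) * hS j ^ (mm - t).
Definition Ff j t x :=
  if Rle_dec (beta * T j) K then Lf j t x
  else if Rle_dec K (T j) then Sf j t x else 0.
Fixpoint Fs (j d : nat) : R :=
  match d with 0 => 0 | d'.+1 => Ff j 0 0 + Fs j.+1 d' end.
Definition absb (j : nat) : bool :=
  match j with 0 => false | j'.+1 => if Rle_dec K (T j') then true else false end.
Definition good := good_eps eps k.

Definition Psi (s : St) : R :=
  match s with
  | Run j t x => if (JJ <= j)%nat then (if good (kb (exp (INR JJ * lb))) then 0 else 1)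
                 else if absb j then 1 else Ff j t x + Fs j.+1 (JJ - j.+1)
  | Stop j => if good (kb (exp (INR j * lb))) then 0 else 1
  end.

Lemma gL_pos j : 0 <= gL j.
Proof. rewrite /gL; have := qj_range j; have := exp_pos (- aa); nra. Qed.
Lemma hS_pos j : 0 <= hS j.
Proof. rewrite /hS; have := qj_range j; have := exp_pos aa; nra. Qed.

Lemma Lf_pos j t x : 0 <= Lf j t x.
Proof. rewrite /Lf; apply: Rmult_le_pos; [left; exact: exp_pos | apply: pow_le; exact: gL_pos]. Qed.
Lemma Sf_pos j t x : 0 <= Sf j t x.
Proof. rewrite /Sf; apply: Rmult_le_pos; [left; exact: exp_pos | apply: pow_le; exact: hS_pos]. Qed.
Lemma Ff_pos j t x : 0 <= Ff j t x.
Proof.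
rewrite /Ff; case: Rle_dec => ? /=; first exact: Lf_pos.
case: Rle_dec => ? /=; [exact: Sf_pos | lra].
Qed.
Lemma Fs_pos j d : 0 <= Fs j d.
Proof.
elim: d j => [|d IH] j /=; first lra.
have := Ff_pos j 0 0; have := IH j.+1; lra.
Qed.

Lemma Lf_mart j t x : (t < mm)%nat ->
  Lf j t x = qj j * Lf j t.+1 x.+1 + (1 - qj j) * Lf j t.+1 x.
Proof.
move=> Ht; rewrite /Lf.
have -> : (mm - t = (mm - t.+1).+1)%nat by lia.
rewrite powS' S_INR.
have -> : aa * (th * M - (INR x + 1)) = aa * (th * M - INR x) + - aa by ring.
rewrite exp_plus /gL; ring.
Qed.

Lemma Sf_mart j t x : (t < mm)%nat ->
  Sf j t x = qj j * Sf j t.+1 x.+1 + (1 - qj j) * Sf j t.+1 x.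
Proof.
move=> Ht; rewrite /Sf.
have -> : (mm - t = (mm - t.+1).+1)%nat by lia.
rewrite powS' S_INR.
have -> : aa * (INR x + 1 - th * M) = aa * (INR x - th * M) + aa by ring.
rewrite exp_plus /hS; ring.
Qed.

Lemma Ff_mart j t x : (t < mm)%nat ->
  Ff j t x = qj j * Ff j t.+1 x.+1 + (1 - qj j) * Ff j t.+1 x.
Proof.
move=> Ht; rewrite /Ff; case: Rle_dec => ? /=; first exact: Lf_mart.
case: Rle_dec => ? /=; [exact: Sf_mart | ring].
Qed.

Lemma Lf_end j x : INR x <= th * M -> 1 <= Lf j mm x.
Proof.
move=> Hx; rewrite /Lf subnn /= Rmult_1_r; apply: exp_ge1.
have := aa_range; nra.
Qed.

Lemma Sf_end j x : th * M < INR x -> 1 <= Sf j mm x.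
Proof.
move=> Hx; rewrite /Sf subnn /= Rmult_1_r; apply: exp_ge1.
have := aa_range; nra.
Qed.

Lemma Ff_end_small j x : INR x <= th * M -> beta * T j <= K -> 1 <= Ff j mm x.
Proof. move=> Hx HK; rewrite /Ff; case: Rle_dec => // ? /=; exact: Lf_end. Qed.

Lemma Ff_end_large j x : th * M < INR x -> K <= T j -> 1 <= Ff j mm x.
Proof.
move=> Hx HK; rewrite /Ff; case: Rle_dec => HK2.
  have := beta_gt1; have := T_pos j; nra.
case: Rle_dec => // ? /=; exact: Sf_end.
Qed.

Lemma good_ok j : K < exp (INR j * lb) -> ~~ absb j -> good (kb (exp (INR j * lb))).
Proof.
move=> HK Ha.
have [H1 H2] := kb_spec (exp_pos (INR j * lb)).
rewrite /good /good_eps.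
case: Rle_dec => H; first by apply: H2.
exfalso; apply: H.
case: j HK Ha H1 H2 => [|j] HK Ha H1 H2.
  move: H1; rewrite Rmult_0_l exp_0.
  case: (kb 1) => [|b]; first by rewrite INR_0 Rmult_0_r => _; exact: pos_INR.
  rewrite S_INR => Hb; have := pos_INR b; lra.
move: Ha; rewrite /absb; case: Rle_dec => // HT _.
have E := eps_T j.
have : (1 - eps) * INR (kb (exp (INR j.+1 * lb))) <= (1 - eps) * exp (INR j.+1 * lb).
  apply: Rmult_le_compat_l; lra.
rewrite E -/K; lra.
Qed.

Lemma K_le_n : K <= INR n.
Proof. apply: le_INR; apply/leP; rewrite /k; have := max_card D; by rewrite card_ord. Qed.

Lemma n_lt_J : INR n < exp (INR JJ * lb).
Proof.
have n1 : 1 < INR n by apply: lt_1_INR; apply/ltP; lia.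
have ln0 : 0 < ln (INR n) by rewrite -ln_1; apply: ln_increasing; lra.
have lbp := lb_pos.
have [A1 A2] := archimed (ln (INR n) / lb).
have q0 : 0 < ln (INR n) / lb by apply: Rdiv_lt_0_compat.
have zp : (0 <= up (ln (INR n) / lb))%Z by apply: le_0_IZR; lra.
have HJ : INR JJ = IZR (up (ln (INR n) / lb)) by rewrite /JJ INR_IZR_INZ Znat.Z2Nat.id.
rewrite -{1}(exp_ln (INR n)); last lra.
apply: exp_increasing; rewrite HJ.
have : ln (INR n) / lb * lb < IZR (up (ln (INR n) / lb)) * lb by apply: Rmult_lt_compat_r; lra.
have -> : ln (INR n) / lb * lb = ln (INR n) by field; lra.
done.
Qed.

Lemma K_lt_J : K < exp (INR JJ * lb).
Proof. have := K_le_n; have := n_lt_J; lra. Qed.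


Definition inv (s : St) : Prop :=
  match s with Run j t x => (t < mm)%nat /\ (j <= JJ)%nat | Stop _ => True end.

Definition rank (s : St) : nat :=
  match s with Run j t x => ((JJ - j) * mm - t)%nat | Stop _ => 0%nat end.

Lemma mm_pos : (0 < mm)%nat.
Proof. by rewrite /mm addn1. Qed.

Lemma inv_nxt s b : inv s -> ~~ isout s -> inv (nxt s b).
Proof.
case: s => [j t x|j] //= [Ht Hj] Hout.
rewrite /nxt; case: ifP => H1; first by split.
case: Rle_dec => ? //=; split; [exact: mm_pos | lia].
Qed.

Lemma rank_nxt s b : inv s -> ~~ isout s -> (rank (nxt s b) < rank s)%nat.
Proof.
case: s => [j t x|j] //= [Ht Hj] Hout.
have Hm : (mm <= (JJ - j) * mm)%nat by apply: leq_pmull; lia.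
rewrite /nxt; case: ifP => H1 /=; first by lia.
have E : ((JJ - j) * mm = (JJ - j.+1) * mm + mm)%nat.
  by rewrite -mulSnr; congr (_ * _)%nat; lia.
case: Rle_dec => ? /=; lia.
Qed.

Lemma absb_up j : absb j -> absb j.+1.
Proof.
case: j => [|j] //=; case: Rle_dec => // H _.
case: Rle_dec => // H'; exfalso; apply: H'.
have := T_mono (leqnSn j); lra.
Qed.

Lemma Psi_abs j t x b : (j < JJ)%nat -> absb j -> Psi (nxt (Run j t x) b) <= 1.
Proof.
move=> Hj Ha; rewrite /nxt; case: ifP => H1 /=.
  rewrite leqNgt Hj Ha /=; lra.
case: Rle_dec => ? /=.
  case: (good _); lra.
case: ifP => H2; first by case: (good _); lra.
have := absb_up Ha; rewrite /absb /=; case: (Rle_dec K (T j)) => //= _ _; lra.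
Qed.

Lemma step_end j t x b : ~~ (t.+1 < mm)%nat -> (t < mm)%nat -> (j < JJ)%nat -> ~~ absb j ->
  Psi (nxt (Run j t x) b) <= Ff j t.+1 (if b then x.+1 else x) + Fs j.+1 (JJ - j.+1).
Proof.
move=> Htm Ht Hj Ha.
have Em : t.+1 = mm by lia.
rewrite /nxt (negbTE Htm); set x' := (if b then x.+1 else x).
have F0 := Ff_pos j t.+1 x'.
have S0 := Fs_pos j.+1 (JJ - j.+1).
case: Rle_dec => Hx /=.
  case G: (good _); first lra.
  case: (Rle_dec (beta * T j) K) => HK.
    have := Ff_end_small Hx HK; rewrite Em; lra.
  exfalso; move: G; rewrite good_ok //.
  rewrite -beta_T; lra.
have Hx' : th * M < INR x' by lra.
case: ifP => HJ.
  case G: (good _); first lra.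
  have EJ : JJ = j.+1 by lia.
  have HK : K <= T j.
    move: G; rewrite EJ; case: (Rle_dec K (T j)) => // HK.
    rewrite good_ok //.
      by rewrite -EJ; exact: K_lt_J.
    by rewrite /absb; case: Rle_dec.
  have := Ff_end_large Hx' HK; rewrite Em; lra.
rewrite /absb; case: Rle_dec => HK /=.
  have := Ff_end_large Hx' HK; rewrite Em; lra.
have -> : (JJ - j.+1 = (JJ - j.+2).+1)%nat by lia.
rewrite /=; lra.
Qed.

Lemma Psi_test j t x : (t < mm)%nat -> (j < JJ)%nat ->
  qj j * Psi (nxt (Run j t x) true) + (1 - qj j) * Psi (nxt (Run j t x) false)
  <= Psi (Run j t x).
Proof.
move=> Ht Hj.
have [q0 q1] := qj_range j.
case Ha: (absb j).
  have A1 := Psi_abs t x true Hj Ha; have A0 := Psi_abs t x false Hj Ha.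
  have -> : Psi (Run j t x) = 1 by rewrite /= leqNgt Hj Ha.
  nra.
have nHa : ~~ absb j by rewrite Ha.
have -> : Psi (Run j t x) = Ff j t x + Fs j.+1 (JJ - j.+1) by rewrite /= leqNgt Hj Ha.
rewrite (Ff_mart _ _ Ht).
case Htm: (t.+1 < mm)%nat.
  have -> : Psi (nxt (Run j t x) true) = Ff j t.+1 x.+1 + Fs j.+1 (JJ - j.+1)
    by rewrite /nxt Htm /= leqNgt Hj Ha.
  have -> : Psi (nxt (Run j t x) false) = Ff j t.+1 x + Fs j.+1 (JJ - j.+1)
    by rewrite /nxt Htm /= leqNgt Hj Ha.
  right; ring.
have nHtm : ~~ (t.+1 < mm)%nat by rewrite Htm.
have E1 : Psi (nxt (Run j t x) true) <= Ff j t.+1 x.+1 + Fs j.+1 (JJ - j.+1)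
  := step_end x true nHtm Ht Hj nHa.
have E0 : Psi (nxt (Run j t x) false) <= Ff j t.+1 x + Fs j.+1 (JJ - j.+1)
  := step_end x false nHtm Ht Hj nHa.
nra.
Qed.


Definition pif j t x := if Rle_dec K (T j) then Sf j t x else 1.
Fixpoint Vaux (d j : nat) : R :=
  match d with 0 => 0 | d'.+1 => M + pif j 0 0 * Vaux d' j.+1 end.
Definition V j := Vaux (JJ - j) j.
Lemma Vaux_S d j : Vaux d.+1 j = M + pif j 0 0 * Vaux d j.+1.
Proof. by []. Qed.
Definition Th (s : St) : R :=
  match s with
  | Run j t x => if (JJ <= j)%nat then 0 else (M - INR t) + pif j t x * V j.+1
  | Stop _ => 0
  end.

Lemma pif_pos j t x : 0 <= pif j t x.
Proof. rewrite /pif; case: Rle_dec => ? /=; [exact: Sf_pos | lra]. Qed.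

Lemma Vaux_pos d j : 0 <= Vaux d j.
Proof.
elim: d j => [|d IH] j /=; first lra.
have := pif_pos j 0 0; have := IH j.+1; have := pos_INR mm; nra.
Qed.

Lemma pif_mart j t x : (t < mm)%nat ->
  pif j t x = qj j * pif j t.+1 x.+1 + (1 - qj j) * pif j t.+1 x.
Proof. move=> Ht; rewrite /pif; case: Rle_dec => ? /=; [exact: Sf_mart | ring]. Qed.

Lemma pif_end j x : th * M < INR x -> 1 <= pif j mm x.
Proof. move=> Hx; rewrite /pif; case: Rle_dec => ? /=; [exact: Sf_end | lra]. Qed.

Lemma Th_run j t x : (j < JJ)%nat -> Th (Run j t x) = M - INR t + pif j t x * V j.+1.
Proof. by move=> Hj; rewrite /Th leqNgt Hj. Qed.

Lemma Th_pos s : inv s -> 0 <= Th s.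
Proof.
case: s => [j t x|j] /=; last by lra.
move=> [Ht _]; case: ifP => _; first lra.
have : INR t < M by apply: lt_INR; apply/ltP.
have := pif_pos j t x; have := Vaux_pos (JJ - j.+1) j.+1; rewrite /V; nra.
Qed.

Lemma Th_end j t x b : ~~ (t.+1 < mm)%nat -> (t < mm)%nat -> (j < JJ)%nat ->
  Th (nxt (Run j t x) b) <= pif j t.+1 (if b then x.+1 else x) * V j.+1.
Proof.
move=> Htm Ht Hj.
have Em : t.+1 = mm by lia.
rewrite /nxt (negbTE Htm); set x' := (if b then x.+1 else x).
have P0 := pif_pos j t.+1 x'.
have V0 := Vaux_pos (JJ - j.+1) j.+1.
rewrite /V in V0 *.
case: Rle_dec => Hx /=; first nra.
have Hx' : th * M < INR x' by lra.
case: ifP => HJ; first nra.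
have E : (JJ - j.+1 = (JJ - j.+2).+1)%nat by lia.
rewrite /V E Vaux_S in V0 *.
rewrite Rminus_0_r.
have P1 : 1 <= pif j t.+1 x' by rewrite Em; exact: pif_end.
nra.
Qed.

Lemma Th_test j t x : (t < mm)%nat -> (j < JJ)%nat ->
  1 + qj j * Th (nxt (Run j t x) true) + (1 - qj j) * Th (nxt (Run j t x) false)
  <= Th (Run j t x).
Proof.
move=> Ht Hj.
have [q0 q1] := qj_range j.
rewrite (Th_run _ _ Hj) (pif_mart _ _ Ht).
case Htm: (t.+1 < mm)%nat.
  have -> : nxt (Run j t x) true = Run j t.+1 x.+1 by rewrite /nxt Htm.
  have -> : nxt (Run j t x) false = Run j t.+1 x by rewrite /nxt Htm.
  rewrite !Th_run // S_INR; right; ring.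
have nHtm : ~~ (t.+1 < mm)%nat by rewrite Htm.
have E1 : Th (nxt (Run j t x) true) <= pif j t.+1 x.+1 * V j.+1 := Th_end x true nHtm Ht Hj.
have E0 : Th (nxt (Run j t x) false) <= pif j t.+1 x * V j.+1 := Th_end x false nHtm Ht Hj.
have Em : M = INR t + 1 by rewrite -S_INR; congr INR; lia.
rewrite Em; nra.
Qed.


Lemma M_pos : 0 <= M.
Proof. exact: pos_INR. Qed.

Lemma Lf0 j : beta * T j <= K -> Lf j 0 0 <= exp (- M * kap).
Proof.
move=> HK.
have q1 := qj_big HK; have [qa qb] := qj_range j.
have [a0 a1] := aa_range.
have Mp := M_pos.
set E := exp aa; set Ei := exp (- aa).
have EEi : E * Ei = 1 by rewrite /E /Ei -exp_plus Rplus_opp_r exp_0.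
have HE : 1 + aa <= E := exp_ineq1_le aa.
have Ei0 : 0 < Ei := exp_pos _.
set w := aa / (1 + aa).
have w1 : w * (1 + aa) = aa by rewrite /w; field; lra.
have w0 : 0 <= w by rewrite /w; apply: Rlt_le; apply: Rdiv_lt_0_compat; lra.
have Hw : w <= 1 - Ei.
  have H1 : Ei * (1 + aa) <= 1 by nra.
  have H2 : 0 <= (1 - Ei - w) * (1 + aa) by nra.
  nra.
have G : gL j <= exp (- (qj j * w)).
  apply: Rle_trans (exp_ineq1_le _).
  rewrite /gL -/Ei; nra.
have G' : gL j ^ mm <= exp (- (qj j * w)) ^ mm.
  apply: pow_incr; split; [exact: gL_pos | exact: G].
rewrite exp_pow in G'.
rewrite /Lf subn0 INR_0 Rminus_0_r.
apply: Rle_trans.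
  apply: Rmult_le_compat_l; [left; exact: exp_pos | exact: G'].
rewrite -exp_plus; apply: exp_le.
have Hk : kap <= qhi * w - aa * th.
  have : kap <= aa * (qhi / (1 + aa) - th) by rewrite /kap; apply: Rmin_l.
  have -> : aa * (qhi / (1 + aa) - th) = qhi * w - aa * th by rewrite /w; field; lra.
  done.
have : qhi * w <= qj j * w by nra.
nra.
Qed.

Lemma Sf0 j : K <= T j -> Sf j 0 0 <= exp (- M * kap).
Proof.
move=> HK.
have q1 := qj_small HK; have [qa qb] := qj_range j.
have [a0 a1] := aa_range.
have Mp := M_pos.
set E := exp aa; set Ei := exp (- aa).
have EEi : E * Ei = 1 by rewrite /E /Ei -exp_plus Rplus_opp_r exp_0.
have HE : 1 - aa <= Ei by have := exp_ineq1_le (- aa); rewrite /Ei; lra.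
have E1 : 1 <= E by rewrite /E; apply: exp_ge1; lra.
set w := aa / (1 - aa).
have w1 : w * (1 - aa) = aa by rewrite /w; field; lra.
have Hw : E - 1 <= w.
  have H1 : E * (1 - aa) <= 1 by nra.
  have H2 : 0 <= (w - (E - 1)) * (1 - aa) by nra.
  nra.
have G : hS j <= exp (qj j * w).
  apply: Rle_trans (exp_ineq1_le _).
  rewrite /hS -/E; nra.
have G' : hS j ^ mm <= exp (qj j * w) ^ mm.
  apply: pow_incr; split; [exact: hS_pos | exact: G].
rewrite exp_pow in G'.
rewrite /Sf subn0 INR_0 Rminus_0_l.
apply: Rle_trans.
  apply: Rmult_le_compat_l; [left; exact: exp_pos | exact: G'].
rewrite -exp_plus; apply: exp_le.
have Hk : kap <= aa * th - w / 2.
  have : kap <= aa * (th - 1 / (2 * (1 - aa))) by rewrite /kap; apply: Rmin_r.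
  have -> : aa * (th - 1 / (2 * (1 - aa))) = aa * th - w / 2 by rewrite /w; field; lra.
  done.
have : qj j * w <= w / 2.
  have : 0 <= w by rewrite /w; apply: Rlt_le; apply: Rdiv_lt_0_compat; lra.
  nra.
nra.
Qed.

Lemma Ff0 j : Ff j 0 0 <= exp (- M * kap).
Proof.
rewrite /Ff; case: Rle_dec => H1 /=; first exact: Lf0.
case: Rle_dec => H2 /=; first exact: Sf0.
left; exact: exp_pos.
Qed.

Lemma Fs_bound j d : Fs j d <= INR d * exp (- M * kap).
Proof.
elim: d j => [|d IH] j; first by rewrite INR_0 /=; lra.
change (Fs j d.+1) with (Ff j 0 0 + Fs j.+1 d).
rewrite S_INR; have := Ff0 j; have := IH j.+1; lra.
Qed.

Lemma Vaux_bound j0 : K <= T j0 -> exp (- M * kap) <= 1/2 ->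
  forall d j, Vaux d j <= M * (2 + INR (j0 - j)).
Proof.
move=> HK Hx; elim=> [|d IH] j.
  rewrite /=; have := M_pos; have := pos_INR (j0 - j); nra.
rewrite Vaux_S.
have V0 := Vaux_pos d j.+1.
have I1 := IH j.+1.
have Mp := M_pos.
have Hle : INR (j0 - j.+1) <= INR (j0 - j) by apply: le_INR; apply/leP; lia.
have I0 := pos_INR (j0 - j.+1).
rewrite /pif; case: Rle_dec => H /=.
  have S1 := Sf0 H; have S0 := Sf_pos j 0 0.
  nra.
have Hj : (j < j0)%nat.
  rewrite ltnNge; apply/negP => Hj; apply: H.
  have := T_mono Hj; lra.
have -> : (j0 - j = (j0 - j.+1).+1)%nat by lia.
rewrite S_INR; nra.
Qed.

Lemma JJ_pos : (0 < JJ)%nat.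
Proof.
case E: JJ => [|J] //.
have := n_lt_J; rewrite E INR_0 Rmult_0_l exp_0.
have : 3 <= INR n by have := le_INR 3 n; rewrite /=; move/(_ (elimT leP hn)); lra.
lra.
Qed.

Lemma main_halt :
  1 - INR JJ * exp (- M * kap) <=
  halt_prob rho D alg (good_eps eps #|D|) ((JJ * mm).+1) [::].
Proof.
rewrite (@bridge_halt n rho D alg St stt isout outv tl nxt).
- apply: Rle_trans; last first.
  apply: (@HP_pot St isout outv _ nxt _ inv _ _ Psi rank _ _ ((JJ * mm).+1) (Run 0 0 0)).
  + move=> s b Is Ho; exact: inv_nxt.
  + case=> [j t x|j] //= _ _; rewrite (qS_eq j t x); have := qj_range j; lra.
  + case=> [j t x|j] /= _ Ho.
      rewrite Ho; rewrite /good; case: (good_eps _ _ _); lra.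
    rewrite /good; case: (good_eps _ _ _); lra.
  + case=> [j t x|j] //= [Ht Hj] Ho; split.
      move=> b; exact: (rank_nxt b (s := Run j t x)).
    rewrite (qS_eq j t x); apply: Psi_test => //; by rewrite ltnNge.
  + by split; [exact: mm_pos | ].
  + rewrite /=; lia.
  rewrite /stt /=.
  have -> : (JJ <= 0)%nat = false by have := JJ_pos; lia.
  rewrite /=.
  have E : Fs 0 JJ = Ff 0 0 0 + Fs 1 (JJ - 1).
    by case: JJ JJ_pos => [|J] //= _; rewrite subn1.
  have := Fs_bound 0 JJ; rewrite E; lra.
- by [].
- by move=> h p; rewrite /stt foldl_rcons.
- case=> [j t x|j] //= _; exact: pool_sum.
Qed.

Lemma main_exp j0 N : K <= T j0 -> exp (- M * kap) <= 1/2 ->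
  exp_tests rho D alg N [::] <= M * (2 + INR j0).
Proof.
move=> HK Hx.
rewrite (@bridge_exp n rho D alg St stt isout outv tl nxt).
- apply: Rle_trans.
    apply: (@ET_pot St isout _ nxt inv _ _ Th _ _ N (Run 0 0 0)).
    + move=> s b Is Ho; exact: inv_nxt.
    + case=> [j t x|j] //= _ _; rewrite (qS_eq j t x); have := qj_range j; lra.
    + exact: Th_pos.
    + case=> [j t x|j] //= [Ht Hj] Ho.
      rewrite (qS_eq j t x); apply: Th_test => //; by rewrite ltnNge.
    + by split; [exact: mm_pos | ].
  change (Th (stt [::])) with (Th (Run 0 0 0)).
  rewrite Th_run; last exact: JJ_pos.
  have := Vaux_bound HK Hx (JJ - 0) 0.
  rewrite subn0 /V.
  have E : Vaux JJ 0 = M + pif 0 0 0 * Vaux (JJ - 1) 1.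
    by case: JJ JJ_pos => [|J] //= _; rewrite subn1.
  rewrite E INR_0 subn0; lra.
- by [].
- by move=> h p; rewrite /stt foldl_rcons.
- case=> [j t x|j] //= _; exact: pool_sum.
Qed.

End Chain.

End Params.

End Algo.

Section Final.
Variables (rho c eps : R).
Hypothesis hrho : 0 < rho < 1/2.
Hypothesis heps : 0 < eps < 1.
Hypothesis hc : 0 < c.

Lemma up_nat z : 0 <= z -> z < INR (Z.to_nat (up z)) /\ INR (Z.to_nat (up z)) <= z + 1.
Proof.
move=> z0; have [A1 A2] := archimed z.
have zp : (0 <= up z)%Z by apply: le_0_IZR; lra.
rewrite INR_IZR_INZ Znat.Z2Nat.id //; lra.
Qed.

Lemma lnn_ge1 n : (3 <= n)%nat -> 1 <= ln (INR n).
Proof.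
move=> hn.
have n3 : 3 <= INR n by have := le_INR 3 n; rewrite /=; move/(_ (elimT leP hn)); lra.
rewrite -(ln_exp 1); case: (Req_dec (exp 1) (INR n)) => [->|H]; first lra.
left; apply: ln_increasing; first exact: exp_pos.
have := exp_le_3; lra.
Qed.

Lemma ln_le_n x : 0 < x -> ln x <= x.
Proof. move=> x0; have := exp_ineq1_le (ln x); rewrite exp_ln //; lra. Qed.

Lemma achieves_eps : exists alg : forall n : nat, strategy n, achieves rho c (good_eps eps) alg.
Proof.
exists (fun n => alg rho c eps n); split; first by move=> n; exact: valid_alg.
have lbp := lb_pos heps.
have kp := kap_pos hrho heps.
have l2 := ln2_pos.
have l2' := ln_lt_2.
exists (((c + 1) / kap rho eps + 2) * (8 + 1 / lb eps)), (1 / lb eps + 1), 3%nat.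
move=> n hn D.
set m := mm rho c eps n.
set z := (c + 1) * ln (INR n) / kap rho eps.
have L1 := lnn_ge1 hn.
have z0 : 0 <= z by rewrite /z; apply: Rlt_le; apply: Rdiv_lt_0_compat; nra.
have [Mz1 Mz2] := up_nat z0.
have HM : INR m = INR (Z.to_nat (up z)) + 1 by rewrite /m /mm -/z addn1 S_INR.
have Mk : (c + 1) * ln (INR n) <= INR m * kap rho eps.
  have -> : (c + 1) * ln (INR n) = z * kap rho eps by rewrite /z; field; lra.
  apply: Rmult_le_compat_r; lra.
have n0 : 0 < INR n by have := le_INR 3 n; rewrite /=; move/(_ (elimT leP hn)); lra.
have Xb : exp (- INR m * kap rho eps) <= exp (- ((c + 1) * ln (INR n))) by apply: exp_le; lra.
split.
- move=> N.
  set K := INR #|D|.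
  have K0 : 0 <= K := pos_INR _.
  have lK0 : 0 <= ln (K + 1) / lb eps.
    apply: Rmult_le_pos; last by left; apply: Rinv_0_lt_compat.
    rewrite -ln_1; case: (Req_dec K 0) => [->|HK0]; first by rewrite Rplus_0_l; lra.
    left; apply: ln_increasing; lra.
  have [J1 J2] := up_nat lK0.
  set j0 := (Z.to_nat (up (ln (K + 1) / lb eps)) + 1)%nat.
  have Tj0 : K <= T eps j0.
    rewrite /T /j0 addn1 S_INR.
    have -> : (INR (Z.to_nat (up (ln (K + 1) / lb eps))) + 1 - 1) * lb eps
       = INR (Z.to_nat (up (ln (K + 1) / lb eps))) * lb eps by ring.
    apply: Rle_trans (_ : exp (ln (K + 1)) <= _).
      rewrite exp_ln; lra.
    apply: exp_le.
    have : ln (K + 1) / lb eps * lb eps <= INR (Z.to_nat (up (ln (K + 1) / lb eps))) * lb eps.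
      apply: Rmult_le_compat_r; lra.
    have -> : ln (K + 1) / lb eps * lb eps = ln (K + 1) by field; lra.
    done.
  have Xh : exp (- INR m * kap rho eps) <= 1 / 2.
    apply: Rle_trans Xb _.
    apply: Rle_trans (_ : exp (- ln (INR n)) <= _).
      apply: exp_le; nra.
    rewrite exp_Ropp exp_ln //.
    have : 3 <= INR n by have := le_INR 3 n; rewrite /=; move/(_ (elimT leP hn)); lra.
    move=> n3; apply: (Rmult_le_reg_l (INR n)) => //.
    rewrite Rinv_r; lra.
  have ME := @main_exp rho c eps n hrho heps hn D j0 N Tj0 Xh.
  rewrite -/m in ME.
  apply: Rle_trans ME _.
  have Hj0 : INR j0 <= ln (K + 1) / lb eps + 2 by rewrite /j0 addn1 S_INR; lra.
  have lK2 : ln (K + 1) <= ln (K + 2).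
    case: (Req_dec K (-1)) => [?|?]; first lra.
    left; apply: ln_increasing; lra.
  have lK2' : / 2 < ln (K + 2).
    apply: Rlt_le_trans l2' _.
    case: (Req_dec K 0) => [->|?]; first by rewrite Rplus_0_l; lra.
    left; apply: ln_increasing; lra.
  have B1 : INR m <= ((c + 1) / kap rho eps + 2) * ln (INR n).
    have -> : ((c + 1) / kap rho eps + 2) * ln (INR n) = z + 2 * ln (INR n) by rewrite /z; field; lra.
    lra.
  have B2 : 2 + INR j0 <= (8 + 1 / lb eps) * ln (K + 2).
    have : ln (K + 1) / lb eps <= ln (K + 2) * (1 / lb eps).
      rewrite /Rdiv Rmult_1_l; apply: Rmult_le_compat_r; [left; apply: Rinv_0_lt_compat; lra | lra].
    nra.
  have P1 : 0 <= (c + 1) / kap rho eps + 2.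
    apply: Rplus_le_le_0_compat; [apply: Rlt_le; apply: Rdiv_lt_0_compat; lra | lra].
  have P2 : 0 <= 8 + 1 / lb eps.
    apply: Rplus_le_le_0_compat; [lra | apply: Rlt_le; apply: Rdiv_lt_0_compat; lra].
  have : INR m * (2 + INR j0) <= (((c + 1) / kap rho eps + 2) * ln (INR n)) * ((8 + 1 / lb eps) * ln (K + 2)).
    apply: Rmult_le_compat => //; [exact: pos_INR | have := pos_INR j0; lra].
  move=> H; apply: Rle_trans H _; right; ring.
- move=> e he; exists ((JJ eps n * m).+1).
  apply: Rle_trans (main_halt c hrho heps hn D).
  have lnp : 0 <= ln (INR n) / lb eps by apply: Rlt_le; apply: Rdiv_lt_0_compat; lra.
  have [J1 J2] := up_nat lnp.
  have HJ : INR (JJ eps n) <= ln (INR n) / lb eps + 1 by rewrite /JJ.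
  have HJ' : INR (JJ eps n) <= (1 / lb eps + 1) * INR n.
    have := ln_le_n n0.
    have : ln (INR n) / lb eps <= INR n * (1 / lb eps).
      rewrite /Rdiv Rmult_1_l; apply: Rmult_le_compat_r; [left; apply: Rinv_0_lt_compat; lra | exact: ln_le_n].
    have : 1 <= INR n by have := le_INR 3 n; rewrite /=; move/(_ (elimT leP hn)); lra.
    nra.
  have E : INR n * exp (- ((c + 1) * ln (INR n))) = Rpower (INR n) (- c).
    rewrite /Rpower -{1}(exp_ln (INR n)) // -exp_plus; f_equal; ring.
  have X0 := exp_pos (- INR m * kap rho eps).
  have : INR (JJ eps n) * exp (- INR m * kap rho eps) <= (1 / lb eps + 1) * Rpower (INR n) (- c).
    rewrite -E.
    apply: Rle_trans (_ : INR (JJ eps n) * exp (- ((c + 1) * ln (INR n))) <= _).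
      apply: Rmult_le_compat_l => //; exact: pos_INR.
    have := exp_pos (- ((c + 1) * ln (INR n))).
    nra.
  rewrite -/m; lra.
Qed.

End Final.

Theorem lemma3 (rho c : R) (hrho : (0 < rho < 1/2)%R) (hc : (0 < c)%R) :
  (exists alg : forall n : nat, strategy n, achieves rho c good_half alg) /\
  (forall eps : R, (0 < eps < 1)%R ->
     exists alg : forall n : nat, strategy n, achieves rho c (good_eps eps) alg).
Proof.
split; last by move=> eps heps; exact: achieves_eps.
have heps : (0 < 1/2 < 1)%R by lra.
have -> : good_half = good_eps (1/2).
  apply: functional_extensionality => k; apply: functional_extensionality => kb.
  rewrite /good_half /good_eps.
  have E2 : INR (2 * k)%nat = (2 * INR k)%R by rewrite -multE mult_INR /=; ring.
  case: Rle_dec => H /=.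
    have : (INR kb <= 2 * INR k)%R by lra.
    rewrite -E2 => /INR_le/leP ->; by [].
  have H0 : ~ (INR kb <= 2 * INR k)%R by lra.
  case: (leqP kb (2 * k)) => //= Hk; exfalso; apply: H0.
  rewrite -E2; apply: le_INR; exact/leP.
exact: achieves_eps.
Qed.
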